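(* Let $H$ be a cluster graph, let $a$ be the maximum number of vertices of a connected component of $H$, and suppose $H$ has exactly $b$ connected components with $a$ vertices. Let $q$ be an integer with $b\le q\le |V(H)|$, and let $R$ be obtained from $H$ by deleting exactly one vertex from each component of $H$ with $a$ vertices. Then for every integer $h$: $H$ has a $q$-deletion such that the maximum degree of the remaining graph is $h$ if and only if $R$ has a $(q-b)$-deletion such that the maximum degree of the remaining graph is $h$.
   Context: A cluster graph is a graph in which every connected component is a complete graph. For a graph $G=(V,E)$ and integer $x\in[0,|V|]$, a set $X\subseteq V$ with $|X|=x$ is an $x$-deletion set of $G$ if $\Delta(G-X)=\min\{\Delta(G-Y):Y\subseteq V,|Y|=x\}$; an $x$-deletion of $G$ is the removal of an $x$-deletion set. Thus ''$G$ has an $x$-deletion with remaining maximum degree $h$'' means $\min\{\Delta(G-Y):|Y|=x\}=h$. *)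

(* Defs.v *)
(* A simple graph is a finite type T with a symmetric,
   irreflexive adjacency relation e.  Subgraphs are induced subgraphs on
   vertex sets S : {set T}. *)
From mathcomp Require Import all_boot.
Set Implicit Arguments. Unset Strict Implicit. Unset Printing Implicit Defensive.

Section Graphs.
Variables (T : finType) (e : rel T).

Definition deg_in (S : {set T}) (v : T) : nat := #|[set w in S | e v w]|.

(* maximum degree of the induced subgraph on S (0 if S is empty) *)
Definition maxdeg (S : {set T}) : nat := \max_(v in S) deg_in S v.

(* "the graph induced on S has an x-deletion with remaining maximum degree h":
   min { Delta(G - Y) : Y subset of S, |Y| = x } = h *)
Definition has_deletion (S : {set T}) (x h : nat) : Prop :=
  (exists Y : {set T}, [/\ Y \subset S, #|Y| = x & maxdeg (S :\: Y) = h]) /\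
  (forall Y : {set T}, Y \subset S -> #|Y| = x -> h <= maxdeg (S :\: Y)).

Definition comp (v : T) : {set T} := [set w | connect e v w].

Definition cluster_graph : Prop :=
  forall x y : T, x != y -> connect e x y -> e x y.

Definition components : {set {set T}} := [set comp v | v in T].

Definition max_comp_size : nat := \max_(v : T) #|comp v|.
End Graphs.

(* Main.v *)
Require Import Defs.
From mathcomp Require Import all_boot.
From mathcomp Require Import zify.

Set Implicit Arguments. Unset Strict Implicit. Unset Printing Implicit Defensive.

Section Aux.
Variables (T : finType) (e : rel T).
Hypotheses (e_sym : symmetric e) (e_irr : irreflexive e) (Hcl : cluster_graph e).

Lemma eE (v w : T) : e v w = (w != v) && connect e v w.
Proof.
apply/idP/andP => [evw|[nwv cvw]].
  split; last exact: connect1.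
  by apply/eqP => wv; subst; rewrite e_irr in evw.
by apply: Hcl => //; rewrite eq_sym.
Qed.

Lemma compS (v u : T) : u \in Defs.comp e v -> Defs.comp e u = Defs.comp e v.
Proof.
rewrite inE => cvu; apply/setP => w; rewrite !inE.
have cs := sym_connect_sym e_sym.
by rewrite (same_connect cs cvu).
Qed.

Lemma comp_self (v : T) : v \in Defs.comp e v.
Proof. by rewrite inE connect0. Qed.

Lemma deg_inE (S : {set T}) v : v \in S -> deg_in e S v = #|S :&: Defs.comp e v| - 1.
Proof.
move=> vS; rewrite /deg_in.
have -> : [set w in S | e v w] = (S :&: Defs.comp e v) :\ v.
  by apply/setP => w; rewrite !inE eE; case: (w \in S); case: (w != v).
rewrite [#|S :&: Defs.comp e v|](cardsD1 v) !inE vS connect0 /=.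
lia.
Qed.

Lemma maxdeg_leP (S : {set T}) k :
  maxdeg e S <= k <-> forall v, #|S :&: Defs.comp e v| <= k.+1.
Proof.
split.
  move=> H v.
  case: (set_0Vmem (S :&: Defs.comp e v)) => [->|[u]]; first by rewrite cards0.
  rewrite inE => /andP[uS uv].
  have := leq_trans (@leq_bigmax_cond _ (fun x => x \in S) (fun v => deg_in e S v) u uS) H.
  rewrite deg_inE // (compS uv); lia.
move=> H; apply/bigmax_leqP => u uS; rewrite deg_inE //; have := H u; lia.
Qed.

Lemma ex_subset (S : {set T}) k : k <= #|S| -> exists Y : {set T}, Y \subset S /\ #|Y| = k.
Proof.
elim: k => [|k IH] H; first by exists set0; rewrite sub0set cards0.
have [Y [YS cY]] := IH (ltnW H).
have : 0 < #|S :\: Y| by rewrite cardsDS //; lia.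
case/card_gt0P => x; rewrite inE => /andP[xY xS].
exists (x |: Y); split.
  by apply/subsetP => z; rewrite !inE => /orP[/eqP->|/(subsetP YS)].
by rewrite cardsU1 xY cY.
Qed.

Variables (a : nat) (D : {set T}).
Hypothesis Ha : a = max_comp_size e.
Hypothesis HD : forall C, C \in components e -> #|D :&: C| = (#|C| == a) :> nat.

Lemma comp_in v : Defs.comp e v \in components e.
Proof. by apply: imset_f. Qed.

Lemma comp_le v : #|Defs.comp e v| <= a.
Proof. by rewrite Ha /max_comp_size; apply: (@leq_bigmax _ (fun v => #|Defs.comp e v|)). Qed.

Lemma D_comp d : d \in D -> #|Defs.comp e d| = a.
Proof.
move=> dD; have := HD (comp_in d).
have : 0 < #|D :&: Defs.comp e d| by apply/card_gt0P; exists d; rewrite inE dD comp_self.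
move=> H1 H2; rewrite H2 in H1; by move: H1; case: eqP.
Qed.

Lemma D_uniq d d' : d \in D -> d' \in D -> d' \in Defs.comp e d -> d' = d.
Proof.
move=> dD d'D d'c.
have : #|D :&: Defs.comp e d| <= 1 by rewrite HD ?comp_in // leq_b1.
move/card_le1_eqP; apply; by rewrite inE ?d'D ?dD ?d'c ?comp_self.
Qed.

Lemma swap k : k.+1 < a -> forall n (Z : {set T}), #|Z :&: D| = n ->
  (forall v, #|Z :&: Defs.comp e v| <= k.+1) ->
  exists Z' : {set T}, [/\ Z' \subset ~: D, #|Z'| = #|Z| & forall v, #|Z' :&: Defs.comp e v| <= k.+1].
Proof.
move=> ka; elim=> [|n IH] Z cnt HZ.
  exists Z; split => //; apply/subsetP => x xZ; rewrite inE.
  apply/negP => xD; move: cnt; have: 0 < #|Z :&: D|.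
    by apply/card_gt0P; exists x; rewrite inE xZ xD.
  lia.
have : 0 < #|Z :&: D| by lia.
case/card_gt0P => d; rewrite inE => /andP[dZ dD].
have cda := D_comp dD.
have : 0 < #|Defs.comp e d :\: Z|.
  have := HZ d; have : #|Z :&: Defs.comp e d| <= #|Defs.comp e d| by apply: subset_leq_card; apply: subsetIr.
  have := @cardsID T Z (Defs.comp e d).
  rewrite setIC; lia.
case/card_gt0P => c; rewrite inE => /andP[cZ cd].
have cD : c \notin D.
  apply/negP => cD; have := D_uniq dD cD cd => ec; subst c; by rewrite dZ in cZ.
have cZd : c \notin Z :\ d by rewrite !inE (negbTE cZ) andbF.
have cdd := compS cd.
have [] := IH (c |: (Z :\ d)).
- rewrite setIUl.
  have -> : [set c] :&: D = set0.
    by apply/setP => x; rewrite !inE; case: eqP => // ->; rewrite (negbTE cD).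
  rewrite set0U; have := cardsD1 d (Z :&: D); rewrite inE dZ dD cnt /=; have -> : (Z :\ d) :&: D = (Z :&: D) :\ d by apply/setP => x; rewrite !inE; case: (x == d). lia.
- move=> v.
  case dv: (d \in Defs.comp e v).
    have cv : c \in Defs.comp e v by rewrite -(compS dv).
    have : #|Z :&: Defs.comp e v| = (d \in Z :&: Defs.comp e v) + #|(Z :&: Defs.comp e v) :\ d| by apply: cardsD1.
    rewrite inE dZ dv /=.
    have -> : (c |: (Z :\ d)) :&: Defs.comp e v = c |: ((Z :&: Defs.comp e v) :\ d).
      by apply/setP => x; rewrite !inE; case: (x =P c) => [->|_] /=; [move: cv; rewrite inE => -> | rewrite andbA].
    rewrite cardsU1 !inE (negbTE cZ) andbF /=.
    have := HZ v; lia.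
  have cv : c \notin Defs.comp e v.
    apply/negP => cv; by rewrite -(compS cv) cdd comp_self in dv.
  have -> : (c |: (Z :\ d)) :&: Defs.comp e v = Z :&: Defs.comp e v.
    move: cv dv; rewrite !inE => /negbTE cv dv.
    apply/setP => x; rewrite !inE; case: (x =P c) => [->|_]; first by rewrite cv !andbF.
    case: (x =P d) => [->|_]; by rewrite ?dv ?andbF.
  exact: HZ.
move=> Z' [Z'D cZ' HZ']; exists Z'; split => //.
by rewrite cZ' cardsU1 cZd (cardsD1 d Z) dZ.
Qed.

End Aux.

Theorem lemma23 (T : finType) (e : rel T)
  (e_sym : symmetric e) (e_irr : irreflexive e)
  (Hcl : cluster_graph e)
  (a b q : nat)
  (Ha : a = max_comp_size e)
  (Hb : b = #|[set C in components e | #|C| == a]|)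
  (Hq : b <= q <= #|T|)
  (D : {set T})
  (HD : forall C, C \in components e -> #|D :&: C| = (#|C| == a) :> nat)
  (h : nat) :
  has_deletion e [set: T] q h <-> has_deletion e (~: D) (q - b) h.
Proof.
have mle := maxdeg_leP e_sym e_irr Hcl.
have Hab : #|D| = b.
  rewrite Hb.
  have -> : [set C in components e | #|C| == a] = [set Defs.comp e d | d in D].
    apply/setP => C; rewrite inE; apply/andP/imsetP.
    - case => /imsetP[v _ ->] /eqP ca.
      have : #|D :&: Defs.comp e v| = 1 by rewrite HD ?comp_in // ca eqxx.
      move=> H1; have [d Hd] := cards1P (introT eqP H1).
      have : d \in [set d] by rewrite set11.
      rewrite -Hd inE => /andP[dD dv].
      by exists d => //; rewrite (compS e_sym dv).
    - case => d dD ->; split; first exact: comp_in.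
      by rewrite (D_comp HD dD).
  rewrite card_in_imset // => d d' dD d'D eq.
  apply/esym; apply: (D_uniq HD dD d'D); rewrite eq; exact: comp_self.
have cardCD : #|~: D| = #|T| - b by have := cardsC D; rewrite Hab; lia.
have stepA : forall Y' : {set T}, Y' \subset ~: D -> #|Y'| = q - b ->
  [/\ Y' :|: D \subset [set: T], #|Y' :|: D| = q & [set: T] :\: (Y' :|: D) = ~: D :\: Y'].
  move=> Y' Y'D cY'; split; first exact: subsetT.
  - rewrite cardsU Hab cY'.
    have -> : Y' :&: D = set0.
      apply/setP => x; rewrite !inE; apply/negP => /andP[xY xD].
      by have := subsetP Y'D x xY; rewrite inE xD.
    rewrite cards0; lia.
  - by apply/setP => x; rewrite !inE; case: (x \in Y'); case: (x \in D).
have stepB : forall Y : {set T}, #|Y| = q -> exists Y' : {set T},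
  [/\ Y' \subset ~: D, #|Y'| = q - b & maxdeg e (~: D :\: Y') <= maxdeg e ([set: T] :\: Y)].
  move=> Y cY.
  have [Hle|Hlt] := leqP a.-1 (maxdeg e ([set: T] :\: Y)).
  - have [|Y' [Y'D cY']] := @ex_subset _ (~: D) (q - b); first by rewrite cardCD; lia.
    exists Y'; split => //; apply: leq_trans Hle; apply/mle => v.
    have := comp_le Ha v.
    have : #|(~: D :\: Y') :&: Defs.comp e v| <= #|Defs.comp e v|.
      by apply: subset_leq_card; apply: subsetIr.
    have : 0 < #|Defs.comp e v| by apply/card_gt0P; exists v; apply: comp_self.
    lia.
  - have ka : (maxdeg e ([set: T] :\: Y)).+1 < a by move: Hlt; rewrite -subn1; lia.
    set Z := [set: T] :\: Y in ka *.
    have HZ := (mle Z _).1 (leqnn _).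
    have [Z' [Z'D cZ' HZ']] := swap e_sym Ha HD ka (erefl _) HZ.
    exists (~: D :\: Z'); split.
    + exact: subsetDl.
    + rewrite cardsDS // cZ' cardCD /Z setTD.
      have := cardsC Y; lia.
    + have -> : ~: D :\: (~: D :\: Z') = Z'.
        apply/setP=> x; rewrite !inE; case xZ: (x \in Z'); case xD: (x \in D) => //=.
        by have := subsetP Z'D x xZ; rewrite inE xD.
      by apply/mle.
split.
- case => [[Y0 [_ cY0 hY0]] Hmin].
  have [Y' [Y'D cY' le']] := stepB Y0 cY0.
  have [s1 s2 s3] := stepA Y' Y'D cY'.
  split.
    exists Y'; split => //; apply/eqP; rewrite eqn_leq; apply/andP; split.
      by rewrite -hY0.
    by rewrite -s3; exact: Hmin.
  move=> Y1 Y1D cY1; have [t1 t2 t3] := stepA Y1 Y1D cY1; rewrite -t3; exact: Hmin.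
- case => [[Y0 [Y0D cY0 hY0]] Hmin]; split.
    have [s1 s2 s3] := stepA Y0 Y0D cY0.
    by exists (Y0 :|: D); split => //; rewrite s3.
  move=> Y _ cY; have [Y' [Y'D cY' le']] := stepB Y cY.
  exact: leq_trans (Hmin _ Y'D cY') le'.
Qed.
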